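(* Let $R$ be an abelian $\star$-ring. If $a\in R$ is $\star$-clean, then $ae$ is $\star$-clean for every $e\in P(R)$.
   Context: Rings are associative with identity; $R$ is abelian if all its idempotents are central. A $\star$-ring is a ring with a map $\star$ satisfying $(x+y)^\star=x^\star+y^\star$, $(xy)^\star=y^\star x^\star$, $(x^\star)^\star=x$. A projection is $p$ with $p^2=p=p^\star$; $P(R)$ is the set of projections, $U(R)$ the units. An element $x$ is $\star$-clean if $x=u+p$ with $u\in U(R)$, $p\in P(R)$. *)

(* Defs.v *)
From mathcomp Require Import all_boot all_algebra.
Set Implicit Arguments. Unset Strict Implicit. Unset Printing Implicit Defensive.
Import GRing.Theory.
Local Open Scope ring_scope.

Definition is_star_ring (R : ringType) (star : R -> R) : Prop :=
  [/\ forall x y : R, star (x + y) = star x + star y,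
      forall x y : R, star (x * y) = star y * star x
    & forall x : R, star (star x) = x].

Definition abelian_ring (R : ringType) : Prop :=
  forall e : R, e * e = e -> forall x : R, e * x = x * e.

Definition projection (R : ringType) (star : R -> R) (p : R) : Prop :=
  p * p = p /\ star p = p.

Definition star_clean (R : unitRingType) (star : R -> R) (x : R) : Prop :=
  exists u p : R, u \is a GRing.unit /\ projection star p /\ x = u + p.

(* Main.v *)
Require Import Defs.
From mathcomp Require Import all_boot all_algebra.
Local Open Scope ring_scope.
Import GRing.Theory.

Lemma aux (R : ringType) (e x y : R) : e * e = e -> (forall z, e * z = z * e) ->
  x * y = 1 -> (x * e - (1 - e)) * (y * e - (1 - e)) = 1.
Proof.
move=> ee ce xy.
have e1 : e * (1 - e) = 0 by rewrite mulrBr mulr1 ee subrr.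
have e2 : (1 - e) * e = 0 by rewrite mulrBl mul1r ee subrr.
have e3 : (1 - e) * (1 - e) = 1 - e by rewrite mulrBr mulr1 e2 subr0.
rewrite mulrBr [_ * (y * e)]mulrBl [_ * (1 - e)]mulrBl e3.
have -> : x * e * (y * e) = e by rewrite mulrA -(mulrA x) ce mulrA xy mul1r ee.
have -> : x * e * (1 - e) = 0 by rewrite -mulrA e1 mulr0.
have -> : (1 - e) * (y * e) = 0 by rewrite -ce mulrA e2 mul0r.
by rewrite subr0 sub0r opprK addrC subrK.
Qed.

Theorem proposition4p14 (R : unitRingType) (star : R -> R) :
  is_star_ring star -> abelian_ring R ->
  forall a : R, star_clean star a ->
  forall e : R, projection star e -> star_clean star (a * e).
Proof.
move=> [sD sM sK] ab a [u [p [uU [[pp sp] ->]]]] e [ee se].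
have ce := ab e ee; have cp := ab p pp.
have s0 : star 0 = 0.
  by have := sD 0 0; rewrite addr0 => /eqP; rewrite -subr_eq subrr => /eqP h; rewrite -h.
have sN : forall x, star (- x) = - star x.
  by move=> x; apply/eqP; rewrite -subr_eq0 opprK -sD addNr s0.
have s1 : star 1 = 1.
  by have := sM (star 1) 1; rewrite !mulr1 !sK mulr1.
exists (u * e - (1 - e)), (p * e + (1 - e)); split; [|split].
- apply/unitrP; exists (u^-1 * e - (1 - e)); split.
  + by apply: aux => //; rewrite mulVr.
  + by apply: aux => //; rewrite mulrV.
- have e1 : e * (1 - e) = 0 by rewrite mulrBr mulr1 ee subrr.
  have e2 : (1 - e) * e = 0 by rewrite mulrBl mul1r ee subrr.
  have e3 : (1 - e) * (1 - e) = 1 - e by rewrite mulrBr mulr1 e2 subr0.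
  split.
  + rewrite mulrDr [_ * (p * e)]mulrDl [_ * (1 - e)]mulrDl e3.
    have -> : p * e * (p * e) = p * e by rewrite mulrA -(mulrA p) ce mulrA pp -mulrA ee.
    have -> : p * e * (1 - e) = 0 by rewrite -mulrA e1 mulr0.
    have -> : (1 - e) * (p * e) = 0 by rewrite -ce mulrA e2 mul0r.
    by rewrite addr0 add0r.
  + by rewrite sD sM sD sN s1 se sp ce.
- by rewrite mulrDl addrA [RHS]addrAC subrK.
Qed.
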